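(* Let $\Gamma_a(V)$ be the augmented Dynkin graph of $V$. (i) If $u,v$ are monomials such that $p_{ij}=p_{ji}=1$ for all $x_i\in\mu(u)$, $x_j\in\mu(v)$ with $i\neq j$, then $[u,v]^-=0$. (ii) Let $m\ge2$, $h_1,\dots,h_m\in\{x_1,\dots,x_n\}$ and $u=h_1\cdots h_m$. If either $|\mu(u)|=1$ or the subgraph of $\Gamma_a(V)$ induced on $\{i:x_i\in\mu(u)\}$ is disconnected, then $\sigma(h_1,\dots,h_m)=0$ for every full bracketing $\sigma$ of $h_1,\dots,h_m$ (in this order) by $[\,,\,]^-$.
   Context: $V$ is a braided vector space of diagonal type over an algebraically closed field of characteristic $0$ with basis $x_1,\dots,x_n$, braiding $C(x_i\otimes x_j)=q_{ij}x_j\otimes x_i$, Nichols algebra $\mathfrak{B}(V)$; $p_{ij}:=q_{ij}$. $[a,b]^-:=ab-ba$. The augmented Dynkin graph $\Gamma_a(V)$ has vertex set $\{1,\dots,n\}$ and an (undirected) edge $\{i,j\}$, $i\neq j$, iff $p_{ij}\neq1$ or $p_{ji}\neq1$. Monomials are words in $x_1,\dots,x_n$ viewed in $\mathfrak{B}(V)$; $\mu(u)$ is the set of letters of $u$. *)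

(* Defs.v *)
From HB Require Import structures.
From mathcomp Require Import all_boot all_order all_algebra all_fingroup.
Set Implicit Arguments. Unset Strict Implicit. Unset Printing Implicit Defensive.
Import GRing.Theory.
Local Open Scope ring_scope.

(* Braided vector space of diagonal type with basis x_0,...,x_{n-1}
   (indexed by 'I_n) and braiding matrix q : C(x_i (x) x_j) = q i j x_j (x) x_i.

   Elements of the tensor algebra T(V) are represented as formal linear
   combinations of words: a word (seq 'I_n) is the monomial x_{w_1}...x_{w_d}. *)

Definition word (n : nat) := seq 'I_n.

(* full bracketings by [,]^-: binary trees whose leaves are letters *)
Inductive btree (n : nat) := BLeaf of 'I_n | BNode of btree n & btree n.
Arguments BLeaf {n}. Arguments BNode {n}.

Section Nichols.
Variables (F : fieldType) (n : nat) (q : 'I_n -> 'I_n -> F).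
Local Notation word := (word n).
Definition lc := seq (F * word).

Definition lc_coef (x : lc) (v : word) : F := \sum_(t <- x | t.2 == v) t.1.

Definition lc_mono (w : word) : lc := [:: (1, w)].
Definition lc_add (x y : lc) : lc := x ++ y.
Definition lc_opp (x : lc) : lc := [seq (- t.1, t.2) | t <- x].
Definition lc_mul (x y : lc) : lc := [seq (t.1 * s.1, t.2 ++ s.2) | t <- x, s <- y].

Definition lc_comm (x y : lc) : lc := lc_add (lc_mul x y) (lc_opp (lc_mul y x)).

(* Braid (Matsumoto) lift T_s of a permutation s of the d = size w tensor
   positions, acting on x_{w_1} (x) ... (x) x_{w_d}: the letter at position a
   moves to position s a, and every pair a < b whose order is swapped
   contributes the factor q (w_a) (w_b). *)
Definition permw (w : word) (s : {perm 'I_(size w)}) : word :=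
  [seq tnth (in_tuple w) ((s^-1)%g k) | k <- enum 'I_(size w)].

Definition invcoef (w : word) (s : {perm 'I_(size w)}) : F :=
  \prod_(a : 'I_(size w))
     \prod_(b : 'I_(size w) | (a < b)%N && (s b < s a)%N)
        q (tnth (in_tuple w) a) (tnth (in_tuple w) b).

Definition qsym (x : lc) : lc :=
  flatten [seq [seq (t.1 * invcoef s, permw s) | s <- enum {perm 'I_(size t.2)}]
          | t <- x].

(* Nichols algebra B(V) = T(V) / (direct sum over d of ker Omega_d).
   x represents 0 in B(V) iff Omega x = 0 in T(V). *)
Definition nichols_zero (x : lc) : Prop := forall v : word, lc_coef (qsym x) v = 0.

Definition dynkin_adj : rel 'I_n :=
  fun i j => (i != j) && ((q i j != 1) || (q j i != 1)).

Definition induced_rel (S : {set 'I_n}) : rel 'I_n :=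
  fun i j => [&& dynkin_adj i j, i \in S & j \in S].

Definition induced_connected (S : {set 'I_n}) : bool :=
  [forall x in S, forall y in S, connect (induced_rel S) x y].

Fixpoint leaves (t : btree n) : word :=
  match t with BLeaf i => [:: i] | BNode l r => leaves l ++ leaves r end.

Fixpoint bracket_eval (t : btree n) : lc :=
  match t with
  | BLeaf i => lc_mono [:: i]
  | BNode l r => lc_comm (bracket_eval l) (bracket_eval r)
  end.

End Nichols.

(* Main.v *)
Require Import Defs.
From HB Require Import structures.
From mathcomp Require Import all_boot all_order all_algebra all_fingroup zify.
Set Implicit Arguments. Unset Strict Implicit. Unset Printing Implicit Defensive.
Import GRing.Theory.
Local Open Scope ring_scope.

Section S.
Variables (F : fieldType) (n : nat) (q : 'I_n -> 'I_n -> F).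

Definition OmF d (f : 'I_d -> 'I_n) (v : word n) : F :=
  \sum_(s <- enum {perm 'I_d} | [seq f ((s^-1)%g k) | k <- enum 'I_d] == v)
     \prod_(a : 'I_d) \prod_(b : 'I_d | (a < b)%N && (s b < s a)%N) q (f a) (f b).

Definition Om (w : word n) v := OmF (tnth (in_tuple w)) v.

Lemma lc_coef_cat (x y : lc F n) v : lc_coef (x ++ y) v = lc_coef x v + lc_coef y v.
Proof. by rewrite /lc_coef big_cat. Qed.

Lemma lc_coef_qsym (x : lc F n) v :
  lc_coef (qsym q x) v = \sum_(t <- x) t.1 * Om t.2 v.
Proof.
elim: x => [|t x IH]; first by rewrite /lc_coef /qsym !big_nil.
rewrite /qsym /= -/(qsym q x) lc_coef_cat IH big_cons; congr (_ + _).
rewrite /lc_coef big_map /Om /OmF mulr_sumr; apply: eq_bigr => s _.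
by [].
Qed.

Lemma OmF_perm d (f : 'I_d -> 'I_n) (tau : {perm 'I_d}) v :
  (forall a b : 'I_d, (a < b)%N != (tau a < tau b)%N -> q (f (tau a)) (f (tau b)) = 1) ->
  OmF (f \o tau) v = OmF f v.
Proof.
move=> H; rewrite /OmF !big_enum_cond /=.
rewrite (reindex_inj (h := fun s => (tau * s)%g)); last exact: mulgI.
apply: eq_big => s.
  congr (_ == _); apply: eq_map => k /=.
  by rewrite invMg permM permKV.
move=> _.
rewrite [RHS](reindex_inj (h := tau)); last exact: perm_inj.
apply: eq_bigr => a _.
rewrite [RHS](reindex_inj (h := tau)); last exact: perm_inj.
rewrite big_mkcond [RHS]big_mkcond; apply: eq_bigr => b _ /=.
rewrite !permM.
have [E|NE] := eqVneq (a < b)%N (tau a < tau b)%N; first by rewrite E.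
rewrite H //; by case: ifP; case: ifP.
Qed.

Lemma OmF_ext d (f g : 'I_d -> 'I_n) v : f =1 g -> OmF f v = OmF g v.
Proof.
move=> E; rewrite /OmF; apply: eq_big => s; first by rewrite (eq_map (fun k => E _)).
move=> _; apply: eq_bigr => a _; apply: eq_bigr => b _; by rewrite !E.
Qed.

Lemma OmF_cast d d' (e : d = d') (f : 'I_d -> 'I_n) (f' : 'I_d' -> 'I_n) v :
  (forall k, f k = f' (cast_ord e k)) -> OmF f v = OmF f' v.
Proof.
case: d' / e f' => f' H; apply: OmF_ext => k; by rewrite H cast_ord_id.
Qed.
End S.
Section S.
Variables (F : fieldType) (n : nat) (q : 'I_n -> 'I_n -> F).

Lemma nth_swap (x0 : 'I_n) p s i j (k : nat) : k != size p -> k != (size p).+1 ->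
  nth x0 (p ++ [:: i, j & s]) k = nth x0 (p ++ [:: j, i & s]) k.
Proof.
move=> h1 h2; rewrite !nth_cat; case: ifP => // /negbT; rewrite -leqNgt => le.
have : (k - size p != 0)%N by lia.
have : (k - size p != 1)%N by lia.
by case: (k - size p)%N => [|[|m]].
Qed.

Lemma Om_swap p s i j v : (i = j \/ (q i j = 1 /\ q j i = 1)) ->
  Om q (p ++ [:: i, j & s]) v = Om q (p ++ [:: j, i & s]) v.
Proof.
case=> [->//|[hij hji]].
set w := p ++ _; set w' := p ++ _.
have e : size w = size w' by rewrite /w /w' !size_cat.
have h0 : (size p < size w)%N by rewrite /w size_cat /=; lia.
have h1 : ((size p).+1 < size w)%N by rewrite /w size_cat /=; lia.
pose k0 := Ordinal h0. pose k1 := Ordinal h1.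
pose tau := tperm k0 k1.
have -> : Om q w' v = OmF q (fun k => tnth (in_tuple w') (cast_ord e k)) v by rewrite /Om; symmetry; apply: (OmF_cast q (e := e)).
rewrite /Om; symmetry; rewrite -(OmF_perm (tau := tau)).
  apply: (OmF_ext q) => k /=; rewrite !(tnth_nth i) /=.
  case: (tpermP k0 k1 k) => [->|->|Ha Hb].
  - by rewrite /w /w' !nth_cat /= ltnn subnn ltnNge leqnSn /= subSnn.
  - by rewrite /w /w' !nth_cat /= ltnn subnn ltnNge leqnSn /= subSnn.
  apply: nth_swap.
    by apply/eqP => E; apply: Ha; apply: val_inj.
  by apply/eqP => E; apply: Hb; apply: val_inj.
move=> a b.
have A : (a = k0 /\ b = k1) \/ (a = k1 /\ b = k0) \/ ((a < b)%N = (tau a < tau b)%N).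
{ rewrite /tau.
  case: (tpermP k0 k1 a) => [Ea|Ea|Ea1 Ea2]; case: (tpermP k0 k1 b) => [Eb|Eb|Eb1 Eb2];
   subst; try by [left|right;left|right;right].
  all: right; right.
  all: try (have Ea1' : nat_of_ord a <> size p by move=> E; apply: Ea1; apply: val_inj).
  all: try (have Ea2' : nat_of_ord a <> (size p).+1 by move=> E; apply: Ea2; apply: val_inj).
  all: try (have Eb1' : nat_of_ord b <> size p by move=> E; apply: Eb1; apply: val_inj).
  all: try (have Eb2' : nat_of_ord b <> (size p).+1 by move=> E; apply: Eb2; apply: val_inj).
  all: rewrite /= ?ltnn //; apply/idP/idP; lia. }
case: A => [[-> ->]|[[-> ->]|E]]; last by rewrite E eqxx.
- move=> _; rewrite /tau tpermL tpermR !(tnth_nth i) /w' /= !nth_cat /= ltnn subnn ltnNge leqnSn /= subSnn //.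
- move=> _; rewrite /tau tpermL tpermR !(tnth_nth i) /w' /= !nth_cat /= ltnn subnn ltnNge leqnSn /= subSnn //.
Qed.
End S.
Section S.
Variables (F : fieldType) (n : nat) (q : 'I_n -> 'I_n -> F).

Definition ceq (w w' : word n) := forall p s v, Om q (p ++ w ++ s) v = Om q (p ++ w' ++ s) v.

Lemma inT (x a : 'I_n) s : x \in s -> x \in a :: s.
Proof. by move=> h; rewrite inE h orbT. Qed.

Lemma ceq_refl w : ceq w w. Proof. by []. Qed.
Lemma ceq_trans w1 w2 w3 : ceq w1 w2 -> ceq w2 w3 -> ceq w1 w3.
Proof. by move=> h1 h2 p s v; rewrite h1 h2. Qed.
Lemma ceq_sym w1 w2 : ceq w1 w2 -> ceq w2 w1.
Proof. by move=> h p s v; rewrite h. Qed.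
Lemma ceq_ctx a b w w' : ceq w w' -> ceq (a ++ w ++ b) (a ++ w' ++ b).
Proof. by move=> h p s v; have := h (p ++ a) (b ++ s) v; rewrite -!catA. Qed.
Lemma ceq_Om w w' v : ceq w w' -> Om q w v = Om q w' v.
Proof. by move=> h; have := h [::] [::] v; rewrite /= !cats0. Qed.

Definition crossq (x y : 'I_n) := q x y = 1 /\ q y x = 1.

Lemma ceq_swap i j : i = j \/ crossq i j -> ceq [:: i; j] [:: j; i].
Proof. by move=> h p s v; apply: Om_swap. Qed.

Lemma ceq_move u y : (forall x, x \in u -> x = y \/ crossq x y) ->
  ceq (u ++ [:: y]) (y :: u).
Proof.
elim: u => [|x u IH] h /=; first exact: ceq_refl.
apply: (ceq_trans (w2 := x :: y :: u)).
  have := ceq_ctx [:: x] [::] (IH (fun z hz => h z (inT _ hz))).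
  by rewrite /= !cats0.
have := ceq_ctx [::] u (ceq_swap (h x (mem_head _ _))).
by rewrite /=.
Qed.

Lemma ceq_sort (P : pred 'I_n) w :
  (forall x y, x \in w -> y \in w -> P x -> ~~ P y -> crossq x y) ->
  ceq w (filter P w ++ filter (predC P) w).
Proof.
elim: w => [|a w IH] h /=; first exact: ceq_refl.
have IH' := IH (fun x y hx hy => h x y (inT _ hx) (inT _ hy)).
apply: (ceq_trans (w2 := a :: (filter P w ++ filter (predC P) w))).
  by have := ceq_ctx [:: a] [::] IH'; rewrite /= !cats0.
case: ifP => Pa /=; first exact: ceq_refl.
apply: ceq_sym.
have := ceq_ctx [::] (filter (predC P) w) (ceq_move (u := filter P w) (y := a) _).
rewrite /= -catA /=; apply.
move=> x; rewrite mem_filter => /andP[Px xw]; right.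
by apply: h; rewrite ?inE ?xw ?eqxx ?orbT ?Pa.
Qed.

Lemma ceq_comm u v : (forall x y, x \in u -> y \in v -> x != y -> crossq x y) ->
  ceq (u ++ v) (v ++ u).
Proof.
elim: v => [|y v IH] h /=; first by rewrite cats0; exact: ceq_refl.
apply: (ceq_trans (w2 := y :: u ++ v)).
  have := ceq_ctx [::] v (ceq_move (u := u) (y := y) _).
  rewrite -catA /=; apply.
  move=> x xu; have [->|ne] := eqVneq x y; first by left.
  by right; apply: h; rewrite ?inE ?eqxx.
have := ceq_ctx [:: y] [::] (IH (fun x z hx hz => h x z hx (inT _ hz))).
by rewrite /= !cats0.
Qed.
End S.
Section S.
Variables (F : fieldType) (n : nat).
Implicit Types (x y : lc F n).

Definition csum x : F := \sum_(t <- x) t.1.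

Lemma csum_add x y : csum (lc_add x y) = csum x + csum y.
Proof. by rewrite /csum big_cat. Qed.
Lemma csum_opp x : csum (lc_opp x) = - csum x.
Proof. by rewrite /csum big_map sumrN. Qed.
Lemma csum_mul x y : csum (lc_mul x y) = csum x * csum y.
Proof.
rewrite /csum /lc_mul big_allpairs_dep /= mulr_suml; apply: eq_bigr => t _.
by rewrite mulr_sumr.
Qed.
Lemma csum_comm x y : csum (lc_comm x y) = 0.
Proof. by rewrite /lc_comm csum_add csum_opp !csum_mul mulrC subrr. Qed.

Lemma lc_group0 (T : eqType) (g : word n -> T) (H : T -> F) x :
  (forall k, \sum_(t <- x | g t.2 == k) t.1 = 0) -> \sum_(t <- x) t.1 * H (g t.2) = 0.
Proof.
move=> h0; set K := undup [seq g t.2 | t <- x].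
transitivity (\sum_(t <- x) \sum_(k <- K) (if g t.2 == k then t.1 * H k else 0)).
  apply: eq_big_seq => t tx.
  have gK : g t.2 \in K by rewrite mem_undup; apply/mapP; exists t.
  rewrite (bigD1_seq (g t.2) gK (undup_uniq _)) /= eqxx big1 ?addr0 //.
  move=> k; by rewrite eq_sym => /negbTE ->.
rewrite exchange_big /= big1 // => k _.
by rewrite -big_mkcond /= -mulr_suml h0 mul0r.
Qed.

Definition key (P : pred 'I_n) (w : word n) := (filter P w, filter (predC P) w).
Definition Kc P x k : F := \sum_(t <- x | key P t.2 == k) t.1.

Lemma Kc_add P x y k : Kc P (lc_add x y) k = Kc P x k + Kc P y k.
Proof. by rewrite /Kc big_cat. Qed.
Lemma Kc_opp P x k : Kc P (lc_opp x) k = - Kc P x k.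
Proof. by rewrite /Kc big_map sumrN. Qed.

Lemma cat_eqE (a c k : word n) :
  (a ++ c == k) = (a == take (size k - size c) k) && (c == drop (size k - size c) k).
Proof.
apply/eqP/andP => [<-|[/eqP ha /eqP hc]].
  by rewrite size_cat addnK take_size_cat // drop_size_cat.
by rewrite {1}ha {2}hc cat_take_drop.
Qed.
Lemma cat_eqE' (c a k : word n) :
  (c ++ a == k) = (c == take (size c) k) && (a == drop (size c) k).
Proof.
apply/eqP/andP => [<-|[/eqP ha /eqP hc]].
  by rewrite take_size_cat // drop_size_cat.
by rewrite hc {1}ha cat_take_drop.
Qed.

Lemma key_cat P a b : key P (a ++ b) = ((key P a).1 ++ (key P b).1, (key P a).2 ++ (key P b).2).
Proof. by rewrite /key !filter_cat. Qed.

Lemma Kc_mul_l P x y : (forall k, Kc P x k = 0) -> forall k, Kc P (lc_mul x y) k = 0.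
Proof.
move=> h [k1 k2]; rewrite /Kc big_mkcond big_allpairs_dep /= exchange_big /=.
apply: big1 => s _.
set c := key P s.2.
pose k' := (take (size k1 - size c.1) k1, take (size k2 - size c.2) k2).
pose D := (c.1 == drop (size k1 - size c.1) k1) && (c.2 == drop (size k2 - size c.2) k2).
transitivity (\sum_(t <- x) (if D then (if key P t.2 == k' then t.1 else 0) * s.1 else 0)).
  apply: eq_bigr => t _; rewrite key_cat xpair_eqE !cat_eqE -/c.
  rewrite /D /k' xpair_eqE.
  by case: (_ == take _ k1); case: (_ == take _ k2); case: (c.1 == _); case: (c.2 == _);
    rewrite ?mul0r.
case: D; last by rewrite big1.
by rewrite -mulr_suml -big_mkcond /=; have := h k'; rewrite /Kc => ->; rewrite mul0r.
Qed.

Lemma Kc_mul_r P x y : (forall k, Kc P y k = 0) -> forall k, Kc P (lc_mul x y) k = 0.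
Proof.
move=> h [k1 k2]; rewrite /Kc big_mkcond big_allpairs_dep /=.
apply: big1 => t _.
set c := key P t.2.
pose k' := (drop (size c.1) k1, drop (size c.2) k2).
pose D := (c.1 == take (size c.1) k1) && (c.2 == take (size c.2) k2).
transitivity (\sum_(s <- y) (if D then t.1 * (if key P s.2 == k' then s.1 else 0) else 0)).
  apply: eq_bigr => s _; rewrite key_cat xpair_eqE !cat_eqE' -/c.
  rewrite /D /k' xpair_eqE.
  by case: (_ == drop _ k1); case: (_ == drop _ k2); case: (c.1 == _); case: (c.2 == _);
    rewrite ?mulr0.
case: D; last by rewrite big1.
by rewrite -mulr_sumr -big_mkcond /=; have := h k'; rewrite /Kc => ->; rewrite mulr0.
Qed.

Lemma Kc_comm_pure P x y :
  (forall t s, t \in x -> s \in y -> key P (t.2 ++ s.2) = key P (s.2 ++ t.2)) ->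
  forall k, Kc P (lc_comm x y) k = 0.
Proof.
move=> h k; rewrite /lc_comm Kc_add Kc_opp; apply/eqP; rewrite subr_eq0; apply/eqP.
rewrite /Kc big_mkcond [RHS]big_mkcond !big_allpairs_dep /= exchange_big /=.
apply: eq_big_seq => s sy; apply: eq_big_seq => t tx /=.
by rewrite h // mulrC.
Qed.

End S.
Section S.
Variables (F : fieldType) (n : nat).

Lemma eval_perm (t : btree n) (u : F * word n) :
  u \in bracket_eval F t -> perm_eq u.2 (leaves t).
Proof.
elim: t u => [i|l IHl r IHr] u /=.
  by rewrite inE => /eqP -> /=.
rewrite /lc_comm /lc_add mem_cat => /orP[].
  case/allpairsP => [[a b] [/= ha hb ->]] /=.
  by rewrite perm_cat ?IHl ?IHr.
case/mapP => z /allpairsP [[a b] [/= ha hb ->]] -> /=.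
rewrite perm_catC perm_cat ?IHl ?IHr //.
Qed.

Lemma filter_all_nil (P : pred 'I_n) (a : word n) : all P a -> filter (predC P) a = [::].
Proof.
move/allP=> h; rewrite (eq_in_filter (a2 := pred0)) ?filter_pred0 // => z /h /= ->; by [].
Qed.
Lemma filter_allC_nil (P : pred 'I_n) (a : word n) : all (predC P) a -> filter P a = [::].
Proof.
move/allP=> h; rewrite (eq_in_filter (a2 := pred0)) ?filter_pred0 // => z /h /=.
by move/negbTE.
Qed.

Lemma key_swap (P : pred 'I_n) (a b : word n) :
  (all P a && all (predC P) b) || (all (predC P) a && all P b) ->
  key P (a ++ b) = key P (b ++ a).
Proof.
rewrite /key !filter_cat => /orP[]/andP[h1 h2].
  by rewrite (filter_all_nil h1) (filter_allC_nil h2) (all_filterP h1) (all_filterP h2) /= ?(cats0 a) ?(cats0 b).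
by rewrite (filter_all_nil h2) (filter_allC_nil h1) (all_filterP h1) (all_filterP h2) /= ?(cats0 a) ?(cats0 b).
Qed.

Lemma mixed_zero (P : pred 'I_n) (t : btree n) :
  has P (leaves t) -> has (predC P) (leaves t) -> forall k, Kc P (bracket_eval F t) k = 0.
Proof.
elim: t => [i|l IHl r IHr] /=.
  by rewrite /= !orbF => ->.
rewrite !has_cat => h1 h2 k.
rewrite /lc_comm Kc_add Kc_opp.
have [ml|ml] := boolP (has P (leaves l) && has (predC P) (leaves l)).
  case/andP: ml => a b.
  by rewrite (Kc_mul_l _ (IHl a b)) (Kc_mul_r _ (IHl a b)) oppr0 addr0.
have [mr|mr] := boolP (has P (leaves r) && has (predC P) (leaves r)).
  case/andP: mr => a b.
  by rewrite (Kc_mul_l _ (IHr a b)) (Kc_mul_r _ (IHr a b)) oppr0 addr0.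
have := Kc_comm_pure (x := bracket_eval F l) (y := bracket_eval F r) (P := P) _ k.
rewrite /lc_comm Kc_add Kc_opp; apply.
move=> u s hu hs; apply: key_swap.
rewrite !(perm_all _ (eval_perm hu)) !(perm_all _ (eval_perm hs)).
have e1 : forall z, has P z = ~~ all (predC P) z by move=> z; rewrite all_predC negbK.
move: h1 h2 ml mr; rewrite !has_predC !e1.
by case: (all P (leaves l)); case: (all P (leaves r));
   case: (all (predC P) (leaves l)); case: (all (predC P) (leaves r)).
Qed.

End S.
Unset Implicit Arguments.

Theorem proposition6p5 (F : closedFieldType) (hchar : [pchar F] =i pred0)
    (n : nat) (q : 'I_n -> 'I_n -> F) (hq : forall i j, q i j != 0) :
  (* (i) *)
  (forall u v : word n,
     (forall i j, i \in u -> j \in v -> i != j -> q i j = 1 /\ q j i = 1) ->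
     nichols_zero q (lc_comm (lc_mono F u) (lc_mono F v)))
  /\
  (* (ii): h_1..h_m = leaves t, sigma = the bracketing t *)
  (forall t : btree n,
     (2 <= size (leaves t))%N ->
     (size (undup (leaves t)) = 1%N \/
      ~~ induced_connected q [set i | i \in leaves t]) ->
     nichols_zero q (bracket_eval F t)).
Proof.
split.
  move=> u v h w; rewrite lc_coef_qsym /= !big_cons big_nil /=.
  rewrite (@ceq_Om _ _ q _ _ w (ceq_comm h)).
  by rewrite GRing.mulr1 GRing.mul1r GRing.mulN1r GRing.addr0 GRing.subrr.
move=> t hsz [h1|hdis] w; rewrite lc_coef_qsym.
  have cs : csum (bracket_eval F t) = 0.
    by case: t hsz {h1} => [j|l r] //= _; apply: csum_comm.
  set L := leaves t.
  case E: (undup L) h1 => [|i [|]] // _.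
  have aL : all (pred1 i) L.
    by apply/allP => z; rewrite -mem_undup E inE.
  have eqL : forall u, u \in bracket_eval F t -> u.2 = L.
    move=> u hu; have p := eval_perm hu.
    have au : all (pred1 i) u.2 by rewrite (perm_all _ p).
    by rewrite (all_pred1P _ _ au) (all_pred1P _ _ aL) (perm_size p).
  rewrite (eq_big_seq (fun u => u.1 * Om q L w)); last by move=> u /eqL ->.
  by rewrite -GRing.mulr_suml -/(csum _) cs GRing.mul0r.
case/forall_inPn: hdis => x xS /forall_inPn [y yS nc].
set S := [set i | i \in leaves t] in xS yS nc.
pose P := [pred z | connect (induced_rel q S) x z].
have Px : P x by rewrite /P inE connect0.
have cross : forall a b, a \in S -> b \in S -> P a -> ~~ P b -> crossq q a b.
{ move=> a b aS bS Pa Pb.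
  have ne : a != b by apply/eqP => E; move: Pb; rewrite -E Pa.
  have [hab|hab] := eqVneq (q a b) 1; have [hba|hba] := eqVneq (q b a) 1;
    try by split.
  all: exfalso; apply: (negP Pb).
  all: rewrite /P inE (connect_trans (y := a)) // connect1 // /induced_rel aS bS /dynkin_adj ne.
  all: by rewrite ?hab ?hba ?orbT. }
have hK := @mixed_zero F _ P t.
have KZ : forall k, Kc P (bracket_eval F t) k = 0.
  apply: hK; apply/hasP.
    by exists x; [move: xS; rewrite inE|].
  by exists y; [move: yS; rewrite inE|].
transitivity (\sum_(u <- bracket_eval F t) u.1 * (fun k => Om q (k.1 ++ k.2) w) (key P u.2)).
  apply: eq_big_seq => u hu /=; congr (_ * _).
  apply: ceq_Om; apply: (ceq_sort (P := P)) => a b ha hb Pa Pb.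
  apply: cross => //; rewrite inE -(perm_mem (eval_perm hu)) //.
refine (@lc_group0 _ n _ (key P) (fun k => Om q (k.1 ++ k.2) w) _ _). exact: KZ.
Qed.
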